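(* Consider the coalition formation algorithm for user association (described in the context) applied to a finite set of users $\mathbf{A}\cup\mathbf{D}$ with $n+1$ coalitions $C_0,\dots,C_n$. Starting from an arbitrary initial partition $C_{ini}$, the algorithm always finds a final partition $C_{fin}$ after a finite number of switch operations, and $C_{fin}$ consists of (at most $n+1$) pairwise disjoint coalitions whose union is $\mathbf{A}\cup\mathbf{D}$.
   Context: Setting: a downlink mmWave system with one base station (BS), indexed $n$, and $n$ mobile relays (MRs), indexed $i=0,1,\dots,n-1$. The finite set of users (players) is $\mathbf{A}\cup\mathbf{D}$. A partition (coalition structure) is $C=\{C_0,C_1,\dots,C_n\}$ with $C_i\cap C_{i'}=\emptyset$ for $i\neq i'$ and $\bigcup_{i=0}^n C_i=\mathbf{A}\cup\mathbf{D}$; $C_i$ is the set of users associated with MR $i$ ($i<n$) or with the BS ($i=n$). Each coalition $C_i$ has a real-valued utility $U(C_i)$, namely its average throughput $U(C_i)=\frac{1}{|C_i|}\sum_{l\in C_i}R_l$, where for a user $l\in C_n$ (BS) $R_l=\alpha_n W\log_2(1+P_r(n,l)/(N_0\alpha_n W))$ and for a user $l\in C_i$, $i<n$ (MR), $R_l=\alpha_i W\log_2\bigl(1+P_r(i,l)/(N_0\alpha_i W+\beta P_i)\bigr)$; here $W>0$ is the total bandwidth, $\alpha_i\ge 0$ with $\sum_{i=0}^n\alpha_i=1$ are fixed bandwidth fractions, $P_r(i,l)>0$ is the received power at user $l$ from the BS/MR $i$, $N_0>0$ the noise spectral density, $P_i$ the MR transmit power and $\beta\ge0$ the self-interference cancellation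 factor. Preference order: for a user $l$ currently in coalition $C_{i'}$ and another coalition $C_i$ ($i\ne i'$), $l$ prefers $C_i$ to $C_{i'}$, written $C_i\succ_l C_{i'}$, iff the sum of the utilities of the two coalitions strictly increases when $l$ moves, i.e. $U(C_i\cup\{l\})+U(C_{i'}\setminus\{l\})>U(C_i)+U(C_{i'})$ (the paper writes this as $U(C_i)+U(C_{i'}\setminus l)>U(C_i\setminus l)+U(C_{i'})$). Switch operation: if $C_i\succ_l C_{i'}$ for $l\in C_{i'}$, move $l$ from $C_{i'}$ to $C_i$, replacing $C$ by $(C\setminus\{C_i,C_{i'}\})\cup\{C_{i'}\setminus\{l\},C_i\cup\{l\}\}$. Algorithm: (1) form a random initial partition $C_{ini}$, set $C_{cur}=C_{ini}$, $j=0$; (2) repeat: select a user $l$ in a predetermined order, with current coalition $C_i$; if there is a coalition $C_{i'}$ with $C_{i'}\succ_l C_i$ and ($|C_{i'}|+1\le Y$ if $i'=n$, or $|C_{i'}|+1\le Z$ if $i'\in\{0,\dots,n-1\}$), where $Y,Z$ are the maximal numbers of users the BS and each MR can serve, then set $j=0$ and perform the switch of $l$ from $C_i$ to $C_{i'}$; otherwise set $j=j+1$; (3) stop when the partition reaches a stable state (no switch has occurred for $j=10(|\mathbf{A}|+|\mathbf{D}|)$ consecutive selections); the resulting partition is $C_{fin}$. *)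

(* Defs.v *)
From HB Require Import structures.
From mathcomp Require Import all_boot all_order all_algebra.
From mathcomp Require Import reals exp.
Set Implicit Arguments.
Unset Strict Implicit.
Unset Printing Implicit Defensive.
Import Order.TTheory GRing.Theory Num.Theory.
Local Open Scope ring_scope.

(* Users (players) A ∪ D form the finite type [T].
   Coalitions are indexed by ['I_n.+1]: indices 0..n-1 are the MRs,
   index [ord_max] (= n) is the BS. *)

Definition coal_struct (T : finType) (n : nat) := {ffun 'I_n.+1 -> {set T}}.

Definition is_partition (T : finType) (n : nat) (C : coal_struct T n) : Prop :=
  (forall i i' : 'I_n.+1, i != i' -> [disjoint C i & C i']) /\
  \bigcup_(i < n.+1) C i = [set: T].

Definition log2 (R : realType) (x : R) : R := ln x / ln 2.

Definition rate (R : realType) (T : finType) (n : nat)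
    (W : R) (alpha : 'I_n.+1 -> R) (Pr : 'I_n.+1 -> T -> R) (N0 : R)
    (P : 'I_n.+1 -> R) (beta : R) (i : 'I_n.+1) (l : T) : R :=
  if i == ord_max then
    alpha i * W * log2 (1 + Pr i l / (N0 * alpha i * W))
  else
    alpha i * W * log2 (1 + Pr i l / (N0 * alpha i * W + beta * P i)).

(* Utility (average throughput) of coalition S served by i.
   For S empty, the MathComp convention x / 0 = 0 gives U = 0. *)
Definition utility (R : realType) (T : finType) (n : nat)
    (rt : 'I_n.+1 -> T -> R) (i : 'I_n.+1) (S : {set T}) : R :=
  (\sum_(l in S) rt i l) / #|S|%:R.

Definition prefers (R : realType) (T : finType) (n : nat)
    (rt : 'I_n.+1 -> T -> R) (C : coal_struct T n) (l : T) (i i' : 'I_n.+1) : Prop :=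
  utility rt i' (l |: C i') + utility rt i (C i :\ l)
    > utility rt i' (C i') + utility rt i (C i).

Definition capacity_ok (T : finType) (n : nat) (Y Z : nat)
    (C : coal_struct T n) (i' : 'I_n.+1) : Prop :=
  (#|C i'| + 1 <= (if i' == ord_max then Y else Z))%N.

Definition switch (T : finType) (n : nat) (C : coal_struct T n) (l : T)
    (i i' : 'I_n.+1) : coal_struct T n :=
  [ffun k => if k == i then C i :\ l else if k == i' then l |: C i' else C k].

(* Algorithm state: (current partition C_cur, counter j, selection step t). *)
Definition alg_state (T : finType) (n : nat) := (coal_struct T n * nat * nat)%type.

Definition alg_stopped (T : finType) (n : nat) (s : alg_state T n) : Prop :=
  (10 * #|T| <= s.1.2)%N.

(* One iteration of step (2): the user [sel t] is selected (sel is the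
   predetermined selection order); either it performs some admissible switch
   (j reset to 0) or no admissible switch exists (j incremented). *)
Definition alg_step (R : realType) (T : finType) (n : nat)
    (rt : 'I_n.+1 -> T -> R) (Y Z : nat) (sel : nat -> T)
    (s s' : alg_state T n) : Prop :=
  let: (C, j, t) := s in
  let: (C', j', t') := s' in
  ~ alg_stopped s /\ t' = t.+1 /\
  ( (exists i i' : 'I_n.+1,
        sel t \in C i /\ i' != i /\ prefers rt C (sel t) i i' /\
        capacity_ok Y Z C i' /\ C' = switch C (sel t) i i' /\ j' = 0%N)
    \/
    ((forall i i' : 'I_n.+1, sel t \in C i -> i' != i ->
        ~ (prefers rt C (sel t) i i' /\ capacity_ok Y Z C i'))
     /\ C' = C /\ j' = j.+1) ).

Inductive alg_reachable (R : realType) (T : finType) (n : nat)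
    (rt : 'I_n.+1 -> T -> R) (Y Z : nat) (sel : nat -> T)
    (s0 : alg_state T n) : alg_state T n -> Prop :=
  | reach_refl : alg_reachable rt Y Z sel s0 s0
  | reach_step s s' : alg_reachable rt Y Z sel s0 s ->
      alg_step rt Y Z sel s s' -> alg_reachable rt Y Z sel s0 s'.

(* Main.v *)
Require Import Defs.
From HB Require Import structures.
From mathcomp Require Import all_boot all_order all_algebra.
From mathcomp Require Import reals exp.
From mathcomp Require Import ring lra zify.
Import Order.TTheory GRing.Theory Num.Theory.
Local Open Scope ring_scope.

Lemma disjP (T : finType) (A B : {set T}) :
  [disjoint A & B] <-> (forall x, x \in A -> x \in B -> False).
Proof.
rewrite disjoint_subset; split.
  by move=> /subsetP H x /H; rewrite inE => /negP.
move=> H; apply/subsetP => x xA; rewrite inE; apply/negP; exact: H.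
Qed.

Lemma partP (T : finType) (n : nat) (C : coal_struct T n) :
  is_partition C <->
  ((forall x (i i' : 'I_n.+1), x \in C i -> x \in C i' -> i = i') /\
   (forall x, exists i, x \in C i)).
Proof.
split.
  case=> Hd Hu; split.
    move=> x i i' xi xi'; apply/eqP; apply/negPn/negP => ne.
    by move/disjP: (Hd _ _ ne) => /(_ x xi xi').
  move=> x; have : x \in [set: T] by rewrite inE.
  by rewrite -Hu => /bigcupP [i _ xi]; exists i.
case=> Hd Hu; split.
  move=> i i' ne; apply/disjP => x xi xi'.
  by move: ne; rewrite (Hd _ _ _ xi xi') eqxx.
apply/setP => x; rewrite inE; case: (Hu x) => i xi.
by apply/bigcupP; exists i.
Qed.

Lemma in_switch (T : finType) (n : nat) (C : coal_struct T n) l (i i' k : 'I_n.+1) x :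
  (forall x (i i' : 'I_n.+1), x \in C i -> x \in C i' -> i = i') ->
  l \in C i -> i' != i ->
  (x \in switch C l i i' k) = (if x == l then k == i' else x \in C k).
Proof.
move=> Hd li ne; rewrite /switch ffunE.
case: (eqVneq x l) => [->|xl]; rewrite ?eqxx ?(negbTE xl).
  case: ifP => [/eqP ki|ki].
    by rewrite ki !inE eqxx /= eq_sym (negbTE ne).
  case: ifP => [_|ki']; first by rewrite !inE eqxx.
  apply/negP => lk; by move: ki; rewrite (Hd _ _ _ lk li) eqxx.
case: ifP => [/eqP ->|ki]; first by rewrite !inE xl.
case: ifP => [/eqP ->|ki']; first by rewrite !inE (negbTE xl).
by [].
Qed.

Lemma switch_part (T : finType) (n : nat) (C : coal_struct T n) (l : T) (i i' : 'I_n.+1) :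
  is_partition C -> l \in C i -> i' != i -> is_partition (switch C l i i').
Proof.
move=> /partP [Hd Hu] li ne; apply/partP; split.
  move=> x k k'; rewrite !(in_switch _ _ _ _ _ _ _ _ Hd li ne).
  case: (x == l) => [/eqP -> /eqP -> //|]; exact: Hd.
move=> x; case: (eqVneq x l) => [->|xl].
  by exists i'; rewrite (in_switch _ _ _ _ _ _ _ _ Hd li ne) eqxx eqxx.
case: (Hu x) => k xk; exists k; by rewrite (in_switch _ _ _ _ _ _ _ _ Hd li ne) (negbTE xl).
Qed.

Definition Upot (R : realType) (T : finType) (n : nat)
  (rt : 'I_n.+1 -> T -> R) (C : coal_struct T n) : R :=
  \sum_(k < n.+1) utility rt k (C k).

Arguments Upot {R T n}.

Lemma sum2 (R : realType) (n : nat) (F : 'I_n.+1 -> R) (i i' : 'I_n.+1) :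
  i' != i ->
  \sum_(k < n.+1) F k = F i + F i' + \sum_(k < n.+1 | (k != i) && (k != i')) F k.
Proof.
move=> ne; rewrite (bigD1 i) //= (bigD1 (P := fun k => k != i) i') //= addrA.
done.
Qed.

Lemma Upot_switch (R : realType) (T : finType) (n : nat)
  (rt : 'I_n.+1 -> T -> R) (C : coal_struct T n) (l : T) (i i' : 'I_n.+1) :
  i' != i ->
  Upot rt (switch C l i i') - Upot rt C =
  (utility rt i' (l |: C i') + utility rt i (C i :\ l))
  - (utility rt i' (C i') + utility rt i (C i)).
Proof.
move=> ne; rewrite /Upot (sum2 _ _ _ _ _ ne) (sum2 _ _ (fun k => utility rt k (C k)) _ _ ne).
have -> : \sum_(k < n.+1 | (k != i) && (k != i')) utility rt k (switch C l i i' k)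
   = \sum_(k < n.+1 | (k != i) && (k != i')) utility rt k (C k).
  apply: eq_bigr => k /andP [ki ki']; by rewrite /switch ffunE (negbTE ki) (negbTE ki').
rewrite /switch !ffunE eqxx (negbTE ne) eqxx.
set S := \sum_(k < n.+1 | _) _.
clearbody S; ring.
Qed.

Set Implicit Arguments.

Definition cnt (R : realType) (T : finType) (n : nat)
  (rt : 'I_n.+1 -> T -> R) (C : coal_struct T n) : nat :=
  #|[set C' : {ffun 'I_n.+1 -> {set T}} | Upot rt C < Upot rt C']|.
Arguments cnt {R T n}.

Lemma cnt_lt (R : realType) (T : finType) (n : nat)
  (rt : 'I_n.+1 -> T -> R) (C C2 : coal_struct T n) :
  Upot rt C < Upot rt C2 -> (cnt rt C2 < cnt rt C)%N.
Proof.
move=> lt12; apply: proper_card; apply/properP; split.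
  apply/subsetP => C'; rewrite !inE => h; exact: lt_trans lt12 h.
by exists C2; rewrite !inE ?ltxx.
Qed.

Definition mu (R : realType) (T : finType) (n : nat)
  (rt : 'I_n.+1 -> T -> R) (s : alg_state T n) : nat :=
  (cnt rt s.1.1 * (10 * #|T|).+1 + (10 * #|T| - s.1.2))%N.
Arguments mu {R T n}.

Lemma mu_step (R : realType) (T : finType) (n : nat)
  (rt : 'I_n.+1 -> T -> R) Y Z sel (s s' : alg_state T n) :
  alg_step rt Y Z sel s s' -> (mu rt s' < mu rt s)%N.
Proof.
case: s => [[C j] t]; case: s' => [[C' j'] t'].
rewrite /alg_step /alg_stopped /mu /=.
set M := (10 * #|T|)%N; clearbody M.
move=> [nstop [_ [[i [i' [li [ne [pref [_ [-> ->]]]]]]] | [_ [-> ->]]]]].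
  have lt : Upot rt C < Upot rt (switch C (sel t) i i').
    by rewrite -subr_gt0 Upot_switch // subr_gt0.
  move: (@cnt_lt _ _ _ _ _ _ lt) nstop; set a := cnt rt _; set b := cnt rt _.
  move=> hab _.
  have : (a.+1 * M.+1 <= b * M.+1)%N by rewrite leq_mul2r hab orbT.
  rewrite mulSn; set x := (a * _)%N; set y := (b * _)%N; clearbody x y; lia.
move/negP: nstop; rewrite -ltnNge => nstop.
set x := (cnt rt C * _)%N; clearbody x; lia.
Qed.

Lemma acc_all (R : realType) (T : finType) (n : nat)
  (rt : 'I_n.+1 -> T -> R) Y Z sel (s : alg_state T n) :
  Acc (fun s' s => alg_step rt Y Z sel s s') s.
Proof.
have : forall k (s : alg_state T n), (mu rt s < k)%N ->
    Acc (fun s' s => alg_step rt Y Z sel s s') s.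
  elim=> [//|k IH] s1 hs; constructor => s2 st.
  apply: IH; have := @mu_step _ _ _ _ _ _ _ _ _ st; lia.
move=> H; exact: (H (mu rt s).+1).
Qed.

Lemma progress (R : realType) (T : finType) (n : nat)
  (rt : 'I_n.+1 -> T -> R) Y Z sel (s : alg_state T n) :
  alg_stopped s \/ exists s', alg_step rt Y Z sel s s'.
Proof.
case: s => [[C j] t]; rewrite /alg_stopped /=.
case: (leqP (10 * #|T|) j) => hj; first by left.
right.
have nst : ~ alg_stopped (C, j, t) by rewrite /alg_stopped /= leqNgt hj.
case: (boolP [exists i : 'I_n.+1, exists i' : 'I_n.+1,
   [&& sel t \in C i, i' != i,
       utility rt i' (sel t |: C i') + utility rt i (C i :\ sel t)
         > utility rt i' (C i') + utility rt i (C i) &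
       (#|C i'| + 1 <= (if i' == ord_max then Y else Z))%N]]).
  move=> /existsP [i /existsP [i' /and4P [li ne p c]]].
  exists (switch C (sel t) i i', 0%N, t.+1); split => //; split => //.
  left; exists i, i'; do !split => //.
move=> H; exists (C, j.+1, t.+1); split => //; split => //.
right; split => //.
move=> i i' li ne [p c]; move/negP: H; apply.
apply/existsP; exists i; apply/existsP; exists i'; apply/and4P; split => //.
Qed.

Lemma invariant (R : realType) (T : finType) (n : nat)
  (rt : 'I_n.+1 -> T -> R) Y Z sel (s0 : alg_state T n) :
  is_partition s0.1.1 ->
  forall s, alg_reachable rt Y Z sel s0 s -> is_partition s.1.1.
Proof.
move=> h0 s; elim => [//|s1 s2 _ IH].
case: s1 IH => [[C j] t]; case: s2 => [[C' j'] t'] /= IH.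
move=> [_ [_ [[i [i' [li [ne [_ [_ [-> _]]]]]]] | [_ [-> _]]]]] //.
exact: switch_part.
Qed.

Theorem theorem1 (R : realType) (T : finType) (n : nat)
    (W : R) (alpha : 'I_n.+1 -> R) (Pr : 'I_n.+1 -> T -> R) (N0 : R)
    (P : 'I_n.+1 -> R) (beta : R) (Y Z : nat) (sel : nat -> T)
    (C_ini : coal_struct T n) :
  0 < W ->
  (forall i, 0 <= alpha i) -> \sum_(i < n.+1) alpha i = 1 ->
  (forall i l, 0 < Pr i l) -> 0 < N0 -> (forall i, 0 <= P i) -> 0 <= beta ->
  is_partition C_ini ->
  let rt := rate W alpha Pr N0 P beta in
  let s0 : alg_state T n := (C_ini, 0%N, 0%N) in
  (* the algorithm terminates: every run from s0 is finite *)
  Acc (fun s' s => alg_step rt Y Z sel s s') s0 /\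
  (* it can only halt by reaching the stopping rule *)
  (forall s, alg_reachable rt Y Z sel s0 s ->
     alg_stopped s \/ exists s', alg_step rt Y Z sel s s') /\
  (* and the final partition is a partition of A ∪ D into the n+1 coalitions *)
  (forall s, alg_reachable rt Y Z sel s0 s -> alg_stopped s ->
     is_partition s.1.1).
Proof.
move=> _ _ _ _ _ _ _ hC rt s0; split; first exact: acc_all.
split; first by move=> s _; exact: progress.
move=> s hs _; exact: (@invariant R T n rt Y Z sel s0 hC s hs).
Qed.
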